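(* For every integer $0\le k\le n$, the set $H_n^k$ is a single orbit of the action $(\pi,\sigma)\bullet A=\pi A\sigma^{-1}$ of $S_n\times S_n$; more explicitly, $$H_n^k=\{\pi\, U_{n,k}\,\sigma \mid \pi,\sigma\in S_n\}.$$
   Context: Permutations are composed as functions, and $\pi\in S_n$ is identified with the $n\times n$ permutation matrix whose $(i,j)$ entry is $1$ iff $i=\pi(j)$. For $A\in GL_n(\mathbb{Z}_2)$ let $\eta(A)$ be the partition obtained by sorting the row sums of $A$ (number of entries equal to $1$ in each row, computed as integers) in weakly decreasing order, and $\theta(A)$ the analogous partition for the column sums. For $0\le k\le n$ define $$H_n^k=\{A\in GL_n(\mathbb{Z}_2)\mid \eta(A)=(n,n-1,\dots,n-k+1,\underbrace{1,\dots,1}_{n-k}),\ \theta(A)=(\underbrace{k+1,\dots,k+1}_{n-k},k,k-1,\dots,2,1)\}.$$ $U_{n,k}$ is the $n\times n$ $(0,1)$-matrix whose upper left $k\times k$ block is upper triangular with all entries on and above the diagonal equal to $1$, whose upper right $k\times(n-k)$ block has all entries $1$, whose lower left $(n-k)\times k$ block is zero, and whose lower right $(n-k)\times(n-k)$ block is the identity $I_{n-k}$. *)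

(* Defs.v *)
From mathcomp Require Import all_boot all_order all_algebra all_fingroup.
Set Implicit Arguments. Unset Strict Implicit. Unset Printing Implicit Defensive.
Import GRing.Theory.
Local Open Scope ring_scope.

Definition pmat (n : nat) (pi : 'S_n) : 'M['F_2]_n :=
  \matrix_(i < n, j < n) (i == pi j)%:R.

Definition rowsum (n : nat) (A : 'M['F_2]_n) (i : 'I_n) : nat :=
  #|[pred j : 'I_n | A i j == 1]|.
Definition colsum (n : nat) (A : 'M['F_2]_n) (j : 'I_n) : nat :=
  #|[pred i : 'I_n | A i j == 1]|.

Definition eta (n : nat) (A : 'M['F_2]_n) : seq nat :=
  sort geq [seq rowsum A i | i <- enum 'I_n].
Definition theta (n : nat) (A : 'M['F_2]_n) : seq nat :=
  sort geq [seq colsum A j | j <- enum 'I_n].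

Definition eta_target (n k : nat) : seq nat :=
  [seq (n - i)%N | i <- iota 0 k] ++ nseq (n - k) 1%N.
Definition theta_target (n k : nat) : seq nat :=
  nseq (n - k) k.+1 ++ [seq (k - i)%N | i <- iota 0 k].

Definition Hnk (n k : nat) : pred 'M['F_2]_n :=
  fun A => [&& A \in unitmx, eta A == eta_target n k & theta A == theta_target n k].

Definition Unk (n k : nat) : 'M['F_2]_n :=
  \matrix_(i < n, j < n)
    (if (i < k)%N then (if (j < k)%N then (i <= j)%N%:R else 1)
     else (if (j < k)%N then 0 else (i == j)%:R)).
Arguments Hnk : clear implicits.
Arguments Unk : clear implicits.
Arguments eta_target : clear implicits.
Arguments theta_target : clear implicits.

(* Main.v *)
Require Import Defs.
From mathcomp Require Import all_boot all_order all_algebra all_fingroup.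
From mathcomp Require Import zify.
From Stdlib Require Import Lia.
Import GRing.Theory.
Local Open Scope ring_scope.

Lemma F2_cases (x : 'F_2) : x = 0 \/ x = 1.
Proof. have : (val x < 2)%N by case: x. case: x => [[|[|m]]] /= H _ //; [left|right]; exact/val_inj. Qed.
Lemma F2_01 : (0 : 'F_2) != 1. Proof. by []. Qed.
Lemma F2_nat (b : bool) : ((b%:R : 'F_2) == 1) = b. Proof. by case: b. Qed.

Lemma card_iota n (p : pred nat) : #|[pred i : 'I_n | p (val i)]| = count p (iota 0 n).
Proof. by rewrite -val_enum_ord count_map -size_filter cardE enumT /enum_mem. Qed.
Lemma count_lt n b : count (fun x => x < b)%N (iota 0 n) = minn b n.
Proof.
elim: n => [|n IH]; first by rewrite minn0.
rewrite -addn1 iotaD count_cat IH /=.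
have [H|H] := ltnP n b; rewrite !minnE; simpl; lia.
Qed.
Lemma card_lt n b : #|[pred i : 'I_n | (val i < b)%N]| = minn b n.
Proof. by rewrite (card_iota n (fun x => x < b)%N) count_lt. Qed.
Lemma card_ge n b : #|[pred i : 'I_n | (b <= val i)%N]| = (n - minn b n)%N.
Proof.
rewrite (card_iota n (fun x => b <= x)%N) -count_lt.
have := count_predC (fun x => x < b)%N (iota 0 n); rewrite size_iota => E.
have -> : count (fun x => b <= x)%N (iota 0 n) = count (predC (fun x => x < b)%N) (iota 0 n).
  by apply: eq_count => x /=; rewrite -leqNgt.
lia.
Qed.

Lemma sub_card_mem (T : finType) (A B : {pred T}) x :
  A \subset B -> (#|B| <= #|A|)%N -> x \in B -> x \in A.
Proof.
move=> sAB le.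
have eq : #|A| = #|B| by apply/eqP; rewrite eqn_leq le subset_leq_card.
by have /(subset_cardP eq) AB := sAB; rewrite AB.
Qed.

Lemma L2 n k (B : 'M['F_2]_n) : (k <= n)%N ->
  (forall r : 'I_n, rowsum B r = if (r < k)%N then (n - r)%N else 1%N) ->
  (forall c : 'I_n, colsum B c = if (c < k)%N then c.+1 else k.+1) ->
  (forall r : 'I_n, (k <= r)%N -> B r r = 1) -> B = Unk n k.
Proof.
move=> kn Hr Hc Hd.
have Hrow1 : forall r c : 'I_n, (k <= r)%N -> B r c = (r == c)%:R.
  move=> r c kr; have := Hr r; rewrite ltnNge kr /= => H1.
  case: (eqVneq r c) => [<-|ne]; first by rewrite Hd.
  case: (F2_cases (B r c)) => // Hc1; exfalso.
  have : (#|[set r; c]| <= rowsum B r)%N.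
    apply: subset_leq_card; apply/subsetP => x; rewrite !inE.
    by case/orP => /eqP ->; rewrite ?Hc1 ?Hd.
  by rewrite H1 cards2 ne.
have Hcolk : forall r c : 'I_n, (r < k)%N -> (k <= c)%N -> B r c = 1.
  move=> r c rk kc.
  have := Hc c; rewrite ltnNge kc /= => H1.
  have Tc : #|[pred x : 'I_n | (x < k)%N || (x == c)]| = k.+1.
    rewrite (card_iota n (fun x => (x < k)%N || (x == val c))).
    have := count_predUI (fun x => x < k)%N (pred1 (val c)) (iota 0 n).
    rewrite count_lt (count_uniq_mem _ (iota_uniq 0 n)) mem_iota /=.
    have -> : count (predI (fun x => x < k)%N (pred1 (val c))) (iota 0 n) = 0%N.
      apply/eqP; rewrite -leqn0 leqNgt -has_count; apply/hasP => [[x _ /=]].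
      by case/andP => xk /eqP xc; move: kc; rewrite -xc leqNgt xk.
    have cn := ltn_ord c.
    rewrite addn0 minnE => E.
    change (count (predU (fun x => x < k)%N (pred1 (val c))) (iota 0 n) = k.+1).
    rewrite E add0n cn; lia.
  suff : r \in [pred x | B x c == 1] by rewrite inE => /eqP.
  apply: (@sub_card_mem _ _ [pred x : 'I_n | (x < k)%N || (x == c)]).
  - apply/subsetP => x; rewrite !inE => /eqP Bx.
    case: (ltnP x k) => //= kx; move: Bx; rewrite Hrow1 //.
    by case: (x == c).
  - by rewrite Tc -H1.
  - by rewrite inE rk.
have stair : forall m (r : 'I_n), val r = m -> (r < k)%N ->
    forall c : 'I_n, (c < k)%N -> B r c = (r <= c)%N%:R.
  elim/ltn_ind => m IH r Hrm rk.
  have step1 : forall c : 'I_n, (c < r)%N -> B r c = 0.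
    move=> c cr; have ck : (c < k)%N by apply: ltn_trans rk.
    have := Hc c; rewrite ck => H1.
    case: (F2_cases (B r c)) => // H2; exfalso.
    have : r \in [pred x : 'I_n | (x <= c)%N].
      apply: (@sub_card_mem _ _ [pred x | B x c == 1]).
      - apply/subsetP => x; rewrite !inE => xc.
        have xm : (val x < m)%N by rewrite -Hrm; apply: leq_ltn_trans cr.
        rewrite (IH _ xm x erefl) ?xc //; apply: leq_ltn_trans ck.
        exact: xc.
      - have -> : #|[pred x : 'I_n | (x <= c)%N]| = c.+1.
          rewrite (card_lt n c.+1); have := ltn_ord c; rewrite minnE; lia.
        by rewrite -H1.
      - by rewrite inE H2.
    by rewrite inE leqNgt cr.
  move=> c ck; case: (ltnP c r) => [cr|rc].
    by rewrite step1 // leqNgt cr.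
  have := Hr r; rewrite rk => H1.
  suff : c \in [pred x | B r x == 1] by rewrite inE => /eqP ->.
  apply: (@sub_card_mem _ _ [pred x : 'I_n | (r <= x)%N]).
  - apply/subsetP => x; rewrite !inE => /eqP Bx.
    case: (ltnP x r) => // xr; move: Bx; rewrite step1 //.
  - rewrite (card_ge n r); move: H1; rewrite /rowsum => ->; have := ltn_ord r; rewrite minnE; lia.
  - by rewrite inE rc.
apply/matrixP => i j; rewrite mxE.
case: (ltnP i k) => ik; case: (ltnP j k) => jk.
- exact: stair.
- exact: Hcolk.
- rewrite Hrow1 //; case: eqP => // E; move: jk; rewrite -E; lia.
- exact: Hrow1.
Qed.
Definition tr n k (r : nat) : nat := if (r < k)%N then (n - r)%N else 1%N.
Definition tc k (c : nat) : nat := if (c < k)%N then c.+1 else k.+1.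

Lemma size_eta_target n k : (k <= n)%N -> size (eta_target n k) = n.
Proof. move=> hk; rewrite /eta_target size_cat size_map size_iota size_nseq; lia. Qed.
Lemma size_theta_target n k : (k <= n)%N -> size (theta_target n k) = n.
Proof. move=> hk; rewrite /theta_target size_cat size_map size_iota size_nseq; lia. Qed.

Lemma eta_target_map n k : (k <= n)%N -> eta_target n k = map (tr n k) (iota 0 n).
Proof.
move=> hk; apply: (@eq_from_nth _ 0%N); first by rewrite size_map size_iota size_eta_target.
move=> i; rewrite size_eta_target // => ilt.
rewrite (nth_map 0%N) ?size_iota // nth_iota // /eta_target nth_cat size_map size_iota /tr add0n.
case: ifP => ik; first by rewrite (nth_map 0%N) ?size_iota // nth_iota.
by rewrite nth_nseq; case: ifP => //; lia.
Qed.

Definition gth n k (q : nat) : nat := if (q < n - k)%N then k.+1 else (n - q)%N.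

Lemma theta_target_map n k : (k <= n)%N -> theta_target n k = map (gth n k) (iota 0 n).
Proof.
move=> hk; apply: (@eq_from_nth _ 0%N); first by rewrite size_map size_iota size_theta_target.
move=> i; rewrite size_theta_target // => ilt.
rewrite (nth_map 0%N) ?size_iota // nth_iota // /theta_target nth_cat size_nseq /gth add0n.
case: ifP => ik; first by rewrite nth_nseq ik.
rewrite (nth_map 0%N) ?size_iota ?nth_iota; lia.
Qed.

Lemma geq_total : total geq. Proof. by move=> a b; rewrite /= leq_total. Qed.
Lemma geq_trans : transitive geq. Proof. by move=> a b c /= h1 h2; apply: leq_trans h2 h1. Qed.
Lemma geq_anti : antisymmetric geq. Proof. by move=> a b /andP [h1 h2]; apply/eqP; rewrite eqn_leq; apply/andP; split. Qed.

Lemma sorted_eta n k : (k <= n)%N -> sorted geq (map (tr n k) (iota 0 n)).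
Proof.
move=> hk; apply/(sortedP 0%N) => i; rewrite size_map size_iota => ilt.
rewrite !(nth_map 0%N) ?size_iota ?nth_iota /tr /=; try lia.
case: ifP; case: ifP; lia.
Qed.

Lemma sorted_theta n k : (k <= n)%N -> sorted geq (map (gth n k) (iota 0 n)).
Proof.
move=> hk; apply/(sortedP 0%N) => i; rewrite size_map size_iota => ilt.
rewrite !(nth_map 0%N) ?size_iota ?nth_iota /gth /=; try lia.
case: ifP; case: ifP; lia.
Qed.

Lemma perm_theta n k : (k <= n)%N -> perm_eq (map (tc k) (iota 0 n)) (map (gth n k) (iota 0 n)).
Proof.
move=> hk.
pose h q := if (q < n - k)%N then (k + q)%N else (n - 1 - q)%N.
have -> : map (gth n k) (iota 0 n) = map (tc k) (map h (iota 0 n)).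
  rewrite -map_comp; apply/eq_in_map => q; rewrite mem_iota /= /gth /tc /h => qn.
  case: ifP; case: ifP; lia.
rewrite perm_sym; apply: perm_map; apply: uniq_perm.
- rewrite map_inj_in_uniq ?iota_uniq // => a b; rewrite !mem_iota /h.
  case: ifP; case: ifP; lia.
- exact: iota_uniq.
- move=> x; rewrite mem_iota; apply/mapP/idP.
  + by case=> q; rewrite mem_iota /h => qn ->; case: ifP; lia.
  + move=> xn; case: (ltnP x k) => xk.
    * exists (n - 1 - x)%N; first by rewrite mem_iota; lia.
      by rewrite /h; case: ifP; lia.
    * exists (x - k)%N; first by rewrite mem_iota; lia.
      by rewrite /h; case: ifP; lia.
Qed.

Lemma card_Tc n k (c : 'I_n) : (k <= c)%N ->
  #|[pred x : 'I_n | (x < k)%N || (x == c)]| = k.+1.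
Proof.
move=> kc.
rewrite (card_iota n (fun x => (x < k)%N || (x == val c))).
have := count_predUI (fun x => x < k)%N (pred1 (val c)) (iota 0 n).
rewrite count_lt (count_uniq_mem _ (iota_uniq 0 n)) mem_iota /=.
have -> : count (predI (fun x => x < k)%N (pred1 (val c))) (iota 0 n) = 0%N.
  apply/eqP; rewrite -leqn0 leqNgt -has_count; apply/hasP => [[x _ /=]].
  by case/andP => xk /eqP xc; move: kc; rewrite -xc leqNgt xk.
have cn := ltn_ord c.
rewrite addn0 minnE => E.
change (count (predU (fun x => x < k)%N (pred1 (val c))) (iota 0 n) = k.+1).
rewrite E add0n cn; lia.
Qed.

Lemma rowsum_U n k (r : 'I_n) : rowsum (Unk n k) r = tr n k r.
Proof.
rewrite /rowsum /tr; case: ifP => rk.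
- rewrite (@eq_card _ _ [pred j : 'I_n | (r <= val j)%N]); last first.
    move=> j; rewrite !inE mxE rk; case: ifP => jk; rewrite ?F2_nat //.
    by rewrite eqxx; symmetry; apply/idP; move: jk rk; case: j => j jn /=; lia.
  rewrite (card_ge n r) minnE; have := ltn_ord r; lia.
- rewrite (@eq_card _ _ (pred1 r)) ?card1 // => j; rewrite !inE mxE rk.
  case: ifP => jk; rewrite ?F2_nat.
  + apply/idP/idP => //; move/eqP => E; move: jk rk; rewrite E => ->.
    by [].
  + by rewrite eq_sym.
Qed.

Lemma colsum_U n k (c : 'I_n) : colsum (Unk n k) c = tc k c.
Proof.
rewrite /colsum /tc; case: ifP => ck.
- rewrite (@eq_card _ _ [pred i : 'I_n | (val i < c.+1)%N]); last first.
    move=> i; rewrite !inE mxE ck; case: ifP => ik; rewrite ?F2_nat //=.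
    symmetry; apply/negbTE; move: ik ck; case: i => i ii /=; lia.
  rewrite (card_lt n c.+1) minnE; have := ltn_ord c; lia.
- rewrite (@eq_card _ _ [pred x : 'I_n | (x < k)%N || (x == c)]); last first.
    move=> i; rewrite !inE mxE ck; case: ifP => ik; rewrite ?F2_nat //=.
  apply: card_Tc; lia.
Qed.

Lemma eta_U n k : (k <= n)%N -> eta (Unk n k) = eta_target n k.
Proof.
move=> hk; rewrite /eta (eq_map (@rowsum_U n k)).
have -> : [seq tr n k (val i) | i : 'I_n <- enum 'I_n] = map (tr n k) (iota 0 n).
  by rewrite -val_enum_ord -map_comp.
by rewrite sorted_sort ?eta_target_map //; [exact: geq_trans | exact: sorted_eta].
Qed.

Lemma theta_U n k : (k <= n)%N -> theta (Unk n k) = theta_target n k.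
Proof.
move=> hk; rewrite /theta (eq_map (@colsum_U n k)).
have -> : [seq tc k (val i) | i : 'I_n <- enum 'I_n] = map (tc k) (iota 0 n).
  by rewrite -val_enum_ord -map_comp.
rewrite theta_target_map //.
rewrite -[RHS](sorted_sort geq_trans (sorted_theta n k hk)).
by apply/perm_sortP; [exact: geq_total | exact: geq_trans | exact: geq_anti | exact: perm_theta].
Qed.

Lemma pmatE n (pi : 'S_n) : pmat pi = perm_mx pi^-1.
Proof.
apply/matrixP => i j; rewrite !mxE.
by rewrite (can2_eq (permKV pi) (permK pi)).
Qed.

Lemma pmat_mul n (pi sigma : 'S_n) (M : 'M['F_2]_n) :
  pmat pi *m M *m pmat sigma = \matrix_(i, j) M ((pi^-1)%g i) (sigma j).
Proof.
rewrite !pmatE -row_permE -[sigma in RHS]invgK -col_permE.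
by apply/matrixP => i j; rewrite !mxE invgK.
Qed.

Lemma rowsum_perm n (M : 'M['F_2]_n) (p s : 'S_n) i :
  rowsum (\matrix_(i, j) M (p i) (s j)) i = rowsum M (p i).
Proof.
rewrite /rowsum (@eq_card _ _ (s @^-1: [set j | M (p i) j == 1])); last first.
  by move=> j; rewrite !inE mxE.
rewrite card_preimset; last exact: perm_inj.
by apply: eq_card => j; rewrite !inE.
Qed.

Lemma colsum_perm n (M : 'M['F_2]_n) (p s : 'S_n) j :
  colsum (\matrix_(i, j) M (p i) (s j)) j = colsum M (s j).
Proof.
rewrite /colsum (@eq_card _ _ (p @^-1: [set i | M i (s j) == 1])); last first.
  by move=> i; rewrite !inE mxE.
rewrite card_preimset; last exact: perm_inj.
by apply: eq_card => i; rewrite !inE.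
Qed.

Lemma map_perm_enum n (p : 'S_n) : perm_eq (map p (enum 'I_n)) (enum 'I_n).
Proof.
apply: uniq_perm; first by rewrite map_inj_uniq ?enum_uniq //; exact: perm_inj.
  exact: enum_uniq.
by move=> x; rewrite mem_enum -[x](permKV p) map_f // mem_enum.
Qed.

Lemma eta_perm n (M : 'M['F_2]_n) (p s : 'S_n) :
  eta (\matrix_(i, j) M (p i) (s j)) = eta M.
Proof.
rewrite /eta (eq_map (rowsum_perm n M p s)); apply/perm_sortP;
  [exact: geq_total | exact: geq_trans | exact: geq_anti |].
by rewrite (map_comp (rowsum M) p) perm_map // map_perm_enum.
Qed.

Lemma theta_perm n (M : 'M['F_2]_n) (p s : 'S_n) :
  theta (\matrix_(i, j) M (p i) (s j)) = theta M.
Proof.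
rewrite /theta (eq_map (colsum_perm n M p s)); apply/perm_sortP;
  [exact: geq_total | exact: geq_trans | exact: geq_anti |].
by rewrite (map_comp (colsum M) s) perm_map // map_perm_enum.
Qed.

Lemma unit_U n k : Unk n k \in unitmx.
Proof.
rewrite unitmxE -det_tr det_trig.
  rewrite (eq_bigr (fun _ => 1)) ?big1_eq ?unitr1 // => i _; rewrite !mxE; by case: (i < k)%N; rewrite /= ?leqnn ?eqxx.
apply/is_trig_mxP => i j ij; rewrite !mxE.
case: ifP => jk; case: ifP => ik //.
- by rewrite leqNgt ij.
- by move: ik jk; lia.
- by case: eqP => // E; move: ij; rewrite E ltnn.
Qed.
Lemma perm_of_eq n (f g : 'I_n -> nat) :
  perm_eq [seq f i | i <- enum 'I_n] [seq g i | i <- enum 'I_n] ->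
  exists P : 'S_n, forall r, f (P r) = g r.
Proof.
move=> H.
have H' : perm_eq [seq g i | i <- enum 'I_n] [tuple f i | i < n].
  by rewrite perm_sym /= /ord_tuple /=.
case/tuple_permP: H' => P E; exists P => r.
have E2 : [seq g i | i <- enum 'I_n] = [seq f (P i) | i <- enum 'I_n].
  by rewrite E /=; apply: eq_map => i; rewrite tnth_mktuple.
by have /eq_in_map E3 := E2; rewrite E3 // mem_enum.
Qed.

Lemma forward_lt n k (A : 'M['F_2]_n) : (k < n)%N -> Hnk n k A ->
  exists pi sigma : 'S_n, A = pmat pi *m Unk n k *m pmat sigma.
Proof.
move=> kn /and3P [Au /eqP He /eqP Ht].
have hk : (k <= n)%N by apply: ltnW.
have [P HP] : exists P : 'S_n, forall r, rowsum A (P r) = rowsum (Unk n k) r.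
  apply: perm_of_eq; apply/(perm_sortP geq_total geq_trans geq_anti).
  by change (eta A = eta (Unk n k)); rewrite He eta_U.
have [S0 HS0] : exists S0 : 'S_n, forall c, colsum A (S0 c) = colsum (Unk n k) c.
  apply: perm_of_eq; apply/(perm_sortP geq_total geq_trans geq_anti).
  by change (theta A = theta (Unk n k)); rewrite Ht theta_U.
pose u i := odflt i [pick j | A i j == 1].
have Hu : forall i, rowsum A i = 1%N -> forall j, (A i j == 1) = (j == u i).
  move=> i H1 j; rewrite /u; case: pickP => [j0 Hj0 | none] /=.
  - apply/idP/eqP => [Hj | ->]; last by [].
    case: (eqVneq j j0) => // ne; exfalso.
    have : (#|[set j; j0]| <= rowsum A i)%N.
      apply: subset_leq_card; apply/subsetP => x; rewrite !inE.
      by case/orP => /eqP ->.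
    by rewrite H1 cards2 ne.
  - by move: H1; rewrite /rowsum eq_card0.
have Hu' : forall i, rowsum A i = 1%N -> forall j, A i j = (j == u i)%:R.
  move=> i H1 j; have := Hu i H1 j.
  by case: (F2_cases (A i j)) => -> E; rewrite -E.
have Uinj : forall i i', rowsum A i = 1%N -> rowsum A i' = 1%N -> u i = u i' -> i = i'.
  move=> i i' H1 H1' E; case: (eqVneq i i') => // ne; exfalso.
  have D : \det A = 0.
    by apply: (determinant_alternate ne) => j; rewrite (Hu' i H1) (Hu' i' H1') E.
  by move: Au; rewrite unitmxE D unitr0.
have HPr : forall r, (rowsum A (P r) == 1%N) = (k <= r)%N.
  move=> r; rewrite HP rowsum_U /tr; case: ifP => rk; have := ltn_ord r; lia.
have HS0c : forall c, (colsum A (S0 c) == k.+1) = (k <= c)%N.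
  move=> c; rewrite HS0 colsum_U /tc; case: ifP => ck; lia.
pose UR := [set i | rowsum A i == 1%N].
have cardUR : #|UR| = (n - k)%N.
  rewrite -(card_preimset UR (@perm_inj _ P)).
  rewrite (@eq_card _ _ [pred r : 'I_n | (k <= val r)%N]); last first.
    by move=> r; rewrite !inE HPr.
  by rewrite (card_ge n k) minnE; lia.
pose CK := [set j | colsum A j == k.+1].
have cardCK : #|CK| = (n - k)%N.
  rewrite -(card_preimset CK (@perm_inj _ S0)).
  rewrite (@eq_card _ _ [pred r : 'I_n | (k <= val r)%N]); last first.
    by move=> r; rewrite !inE HS0c.
  by rewrite (card_ge n k) minnE; lia.
pose IU := u @: UR.
have cardIU : #|IU| = (n - k)%N.
  rewrite card_in_imset ?cardUR // => i i'; rewrite !inE => /eqP H1 /eqP H1'.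
  exact: Uinj.
have CKIU : CK \subset IU.
  apply/subsetP => j; rewrite inE => /eqP Cj; apply/negPn/negP => nj.
  have : (colsum A j <= #|~: UR|)%N.
    apply: subset_leq_card; apply/subsetP => i; rewrite !inE => Aij.
    apply/negP => /eqP Ri; move/negP: nj; apply; apply/imsetP; exists i; first by rewrite inE Ri.
    by apply/eqP; rewrite -(Hu i Ri j).
  have := cardsC UR; rewrite card_ord cardUR Cj; lia.
have colu : forall i, rowsum A i = 1%N -> colsum A (u i) = k.+1.
  move=> i H1; apply/eqP.
  have : u i \in CK.
    apply: (@sub_card_mem _ CK IU _ CKIU); first by rewrite cardIU cardCK.
    by apply/imsetP; exists i; rewrite // inE H1.
  by rewrite inE.
pose Sf (c : 'I_n) := if (c < k)%N then S0 c else u (P c).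
have Sinj : injective Sf.
  move=> c c'; rewrite /Sf; case: ifP => ck; case: ifP => ck' E.
  - exact: perm_inj E.
  - exfalso; have := HS0 c; rewrite E colsum_U colu; last by apply/eqP; rewrite HPr leqNgt ck'.
    by rewrite /tc ck; lia.
  - exfalso; have := HS0 c'; rewrite -E colsum_U colu; last by apply/eqP; rewrite HPr leqNgt ck.
    by rewrite /tc ck'; lia.
  - apply: (@perm_inj _ P); apply: Uinj E; apply/eqP; rewrite HPr leqNgt ?ck ?ck' //.
pose S := perm Sinj.
pose B := \matrix_(r, c) A (P r) (S c).
have HB : B = Unk n k.
  apply: L2 => //.
  - by move=> r; rewrite /B rowsum_perm HP rowsum_U.
  - move=> c; rewrite /B colsum_perm permE /Sf; case: ifP => ck.
      by rewrite HS0 colsum_U /tc ck.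
    by rewrite colu //; apply/eqP; rewrite HPr leqNgt ck.
  - move=> r kr; rewrite /B mxE permE /Sf leqNgt in kr *.
    rewrite (negbTE kr) (Hu' (P r)) ?eqxx //.
    by apply/eqP; rewrite HPr leqNgt.
exists P, S^-1%g; rewrite pmat_mul; apply/matrixP => i j.
by rewrite mxE -HB /B mxE !permKV.
Qed.

Lemma eta_target_nn m : eta_target m.+1 m.+1 = eta_target m.+1 m.
Proof.
rewrite !eta_target_map // ?leqnSn //; apply/eq_in_map => q; rewrite mem_iota /tr; case: ifP; case: ifP; lia.
Qed.

Lemma theta_target_nn m : theta_target m.+1 m.+1 = theta_target m.+1 m.
Proof.
rewrite !theta_target_map // ?leqnSn //; apply/eq_in_map => q; rewrite mem_iota /gth; case: ifP; case: ifP; lia.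
Qed.

Lemma Unk_nn m : Unk m.+1 m.+1 = Unk m.+1 m.
Proof.
apply/matrixP => i j; rewrite !mxE; have := ltn_ord i; have := ltn_ord j.
case: ifP; case: ifP; case: ifP; case: ifP => // *; try (congr (_%:R); lia); try lia.
all: try (rewrite (_ : (i <= j)%N = true) //; lia); try (rewrite (_ : (i <= j)%N = false) //; lia).
all: rewrite (_ : i = j) ?leqnn ?eqxx //; apply: val_inj => /=; lia.
Qed.

Theorem mainTheorem1 (n k : nat) (hk : (k <= n)%N) (A : 'M['F_2]_n) :
  Hnk n k A <-> exists pi sigma : 'S_n, A = pmat pi *m Unk n k *m pmat sigma.
Proof.
split.
- move=> HA; case: (ltnP k n) => kn; first exact: forward_lt.
  have kE : k = n by apply/eqP; rewrite eqn_leq hk kn.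
  subst k; case: n hk kn A HA => [|m] _ _ A HA.
    by exists 1%g, 1%g; apply/matrixP => [[i ii]].
  rewrite Unk_nn; apply: forward_lt => //.
  by move: HA; rewrite /Hnk eta_target_nn theta_target_nn.
- case=> pi [sigma ->]; apply/and3P; split.
  + by rewrite !unitmx_mul !pmatE !unitmx_perm unit_U.
  + by rewrite pmat_mul eta_perm eta_U.
  + by rewrite pmat_mul theta_perm theta_U.
Qed.
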